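(* Let $\alpha>\sqrt2+1$. The expected runtime of the Metropolis algorithm with parameter $\alpha$ on $\mathrm{DLB}:\{0,1\}^n\to\mathbb{R}$ is at most $\frac{n^2}{C(\alpha)}$, where $C(\alpha)=\frac{2}{\alpha}\left(\frac12-2\sum_{k=1}^\infty k\alpha^{-2k}\right)$.
   Context: Let $n$ be an even positive integer. For $x\in\{0,1\}^n$ consider the blocks $(x_{2\ell+1},x_{2\ell+2})$, $\ell=0,\dots,\frac n2-1$. If $x\neq(1,\dots,1)$, let $m$ be the smallest $\ell$ with $x_{2\ell+1}\neq 1$ or $x_{2\ell+2}\neq 1$, and define $\mathrm{DLB}(x)=2m+1$ if $x_{2m+1}+x_{2m+2}=0$ and $\mathrm{DLB}(x)=2m$ if $x_{2m+1}+x_{2m+2}=1$; set $\mathrm{DLB}(1,\dots,1)=n$. The Metropolis algorithm with parameter $\alpha>1$ maximizing $f:\{0,1\}^n\to\mathbb{R}$: choose $x^{(0)}$ uniformly at random in $\{0,1\}^n$. In each iteration $t=1,2,\dots$, choose $i\in[1..n]$ uniformly at random and let $y$ be $x^{(t-1)}$ with the $i$-th bit flipped. If $f(y)\ge f(x^{(t-1)})$ set $x^{(t)}=y$; otherwise set $x^{(t)}=y$ with probability $\alpha^{f(y)-f(x^{(t-1)})}$ and $x^{(t)}=x^{(t-1)}$ otherwise. Each generated search point is evaluated; the runtime is the number of fitness evaluations until (and including) the first evaluation of an optimum of $f$. *)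

(* Defs.v *)
From HB Require Import structures.
From mathcomp Require Import all_boot all_order all_algebra.
From mathcomp Require Import all_classical all_reals all_analysis.
Set Implicit Arguments. Unset Strict Implicit. Unset Printing Implicit Defensive.
Import Order.TTheory GRing.Theory Num.Theory.
Local Open Scope ring_scope.

(* Bit strings x = (x_1,...,x_n); coordinate x_{k+1} is [x (k : 'I_n)]. *)
Definition bits (n : nat) := {ffun 'I_n -> bool}.

(* 0-indexed bit access (x_{k+1} in the paper); false out of range. *)
Definition bitn (n : nat) (x : bits n) (k : nat) : bool :=
  if insub k is Some i then x i else false.

(* DLB: blocks (x_{2l+1}, x_{2l+2}) = (bitn x (2l), bitn x (2l+1)), l < n/2.
   m = smallest l whose block is not (1,1); if none, DLB = n. *)
Definition DLB (n : nat) (x : bits n) : nat :=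
  let m := find (fun l => ~~ (bitn x l.*2 && bitn x l.*2.+1)) (iota 0 n./2) in
  if m == n./2 then n
  else if ~~ bitn x m.*2 && ~~ bitn x m.*2.+1 then m.*2.+1 else m.*2.

Definition flip (n : nat) (x : bits n) (i : 'I_n) : bits n :=
  [ffun j => if j == i then ~~ x j else x j].

Definition is_opt (R : realType) (n : nat) (f : bits n -> R) (x : bits n) : bool :=
  [forall y, f y <= f x].

Definition acc (R : realType) (alpha : R) (n : nat) (f : bits n -> R)
  (x y : bits n) : R :=
  if f x <= f y then 1 else alpha `^ (f y - f x).

(* surv alpha f t y = Pr[ x^(t) = y and none of the t+1 evaluated points
   x^(0), y^(1), ..., y^(t) (y^(s) = proposal of iteration s) is an optimum ]. *)
Fixpoint surv (R : realType) (alpha : R) (n : nat) (f : bits n -> R) (t : nat)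
  (y : bits n) : R :=
  match t with
  | 0 => if is_opt f y then 0 else (#|{: bits n}|%:R)^-1
  | t'.+1 =>
      \sum_(x : bits n) surv alpha f t' x *
        \sum_(i : 'I_n) (n%:R)^-1 *
          (if is_opt f (flip x i) then 0
           else acc alpha f x (flip x i) * ((flip x i == y)%:R)
                + (1 - acc alpha f x (flip x i)) * ((x == y)%:R))
  end.

(* Expected runtime T (number of evaluations up to and including the first
   evaluation of an optimum), via E[T] = sum_{k>=0} Pr[T > k]:
   Pr[T > 0] = 1 and Pr[T > t+1] = sum_y surv t y. *)
Local Open Scope ereal_scope.
Definition expected_runtime (R : realType) (alpha : R) (n : nat)
  (f : bits n -> R) : \bar R :=
  (1 + \sum_(0 <= t <oo) ((\sum_(y : bits n) surv alpha f t y)%:E))%E.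
Local Close Scope ereal_scope.

Definition Cconst (R : realType) (alpha : R) : R :=
  2 / alpha * (2^-1 - 2 * limn (fun N => \sum_(1 <= k < N) k%:R * alpha ^- (2 * k))).

(* Main.v *)
Require Import Defs.
From HB Require Import structures.
From mathcomp Require Import all_boot all_order all_algebra.
From mathcomp Require Import all_classical all_reals all_analysis.
From mathcomp Require Import zify ring lra.
Import Order.TTheory GRing.Theory Num.Theory.
Set Implicit Arguments. Unset Strict Implicit. Unset Printing Implicit Defensive.

Definition bad n (x : bits n) l := ~~ (bitn x l.*2 && bitn x l.*2.+1).

Definition dform n (x : bits n) m :=
  if ~~ bitn x m.*2 && ~~ bitn x m.*2.+1 then m.*2.+1 else m.*2.

Lemma DLB_cases n (x : bits n) :
  ((forall l, l < n./2 -> ~~ bad x l) /\ DLB x = n) \/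
  exists m, [/\ m < n./2, bad x m, (forall l, l < m -> ~~ bad x l) &
                 DLB x = dform x m].
Proof.
rewrite /DLB.
set a := (fun l => _).
have Hs := find_size a (iota 0 n./2); rewrite size_iota in Hs.
case: eqP => Hk.
  left; split => // l Hl.
  have := @before_find _ 0 a (iota 0 n./2) l; rewrite Hk nth_iota // add0n.
  by move=> /(_ Hl); rewrite /a /bad => ->.
right; exists (find a (iota 0 n./2)); split.
- by rewrite ltn_neqAle Hs andbT; apply/eqP.
- have Hh : has a (iota 0 n./2) by rewrite has_find size_iota ltn_neqAle Hs andbT; apply/eqP.
  have := nth_find 0 Hh; rewrite nth_iota ?add0n //.
  by rewrite ltn_neqAle Hs andbT; apply/eqP.
- move=> l Hl; have := @before_find _ 0 a (iota 0 n./2) l Hl.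
  rewrite nth_iota ?add0n; last by apply: leq_trans Hl Hs.
  by rewrite /a /bad => ->.
- by [].
Qed.

Lemma DLB_eqm n (x : bits n) m : m < n./2 -> bad x m ->
  (forall l, l < m -> ~~ bad x l) -> DLB x = dform x m.
Proof.
move=> Hm Hb Hl; case: (DLB_cases x) => [[Ha _]|[m' [Hm' Hb' Hl' ->]]].
  by move: (Ha _ Hm); rewrite Hb.
case: (ltngtP m m') => [H|H|-> //].
  by move: (Hl' _ H); rewrite Hb.
by move: (Hl _ H); rewrite Hb'.
Qed.

Lemma DLB_all n (x : bits n) : (forall l, l < n./2 -> ~~ bad x l) -> DLB x = n.
Proof.
move=> Ha; case: (DLB_cases x) => [[_ ->] //|[m' [Hm' Hb' _ _]]].
by move: (Ha _ Hm'); rewrite Hb'.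
Qed.

Lemma dform_bounds n (x : bits n) m : m.*2 <= dform x m <= m.*2.+1.
Proof. by rewrite /dform; case: ifP => _; rewrite ?leqnn ?leqnSn. Qed.

Lemma DLB_le n (x : bits n) : ~~ odd n -> DLB x <= n.
Proof.
move=> Hn; case: (DLB_cases x) => [[_ ->] //|[m [Hm _ _ ->]]].
have := dform_bounds x m; have := halfK n; rewrite (negbTE Hn) subn0.
move=> E /andP[_ H]; apply: (leq_trans H); move: Hm E H; set L := n./2 => Hm E H; rewrite -E -!muln2; lia.
Qed.

Lemma DLB_gt n (x : bits n) m : m < n./2 -> (forall l, l <= m -> ~~ bad x l) ->
  DLB x = n \/ (m.+1).*2 <= DLB x.
Proof.
move=> Hm Ha; case: (DLB_cases x) => [[_ ->]|[m' [Hm' Hb' _ ->]]]; first by left.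
right; have := dform_bounds x m'; move=> /andP[H _]; apply: leq_trans H.
rewrite leq_double; case: (ltnP m m') => // H.
by move: (Ha _ H); rewrite Hb'.
Qed.

Definition flipq n (x : bits n) (q : nat) : bits n :=
  [ffun j => if val j == q then ~~ x j else x j].

Lemma flipE n (x : bits n) (i : 'I_n) : flip x i = flipq x i.
Proof. by apply/ffunP => j; rewrite !ffunE. Qed.

Lemma bitn_flipq n (x : bits n) q k : q < n ->
  bitn (flipq x q) k = if k == q then ~~ bitn x k else bitn x k.
Proof.
move=> Hq; rewrite /bitn; case: insubP => [j Hk Hj|Hk].
  by rewrite ffunE Hj.
have -> : (k == q) = false by apply/negbTE; apply/eqP => E; move: Hk; rewrite E Hq.
by [].
Qed.


Lemma bitn_fo n (x : bits n) q k : q < n -> k != q -> bitn (flipq x q) k = bitn x k.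
Proof. by move=> Hq Hk; rewrite bitn_flipq // (negbTE Hk). Qed.
Lemma bitn_fs n (x : bits n) q : q < n -> bitn (flipq x q) q = ~~ bitn x q.
Proof. by move=> Hq; rewrite bitn_flipq // eqxx. Qed.

Lemma good_bits n (x : bits n) l : ~~ bad x l -> bitn x l.*2 /\ bitn x l.*2.+1.
Proof. by rewrite /bad negbK => /andP. Qed.

Ltac neq := apply/eqP; rewrite -?muln2; lia.

Ltac simpflip := repeat first [rewrite bitn_fs //| (rewrite bitn_fo //; [| neq])].
Ltac fin := repeat match goal with
  | H : is_true (~~ bitn _ _) |- _ => rewrite ?(negbTE H); clear H
  | H : is_true (bitn _ _) |- _ => rewrite ?H; clear H end; by [].

Lemma flip_prefix n (x : bits n) q m : q < n -> m.*2.+2 <= q ->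
  (forall j, j <= m -> bad (flipq x q) j = bad x j) /\
  dform (flipq x q) m = dform x m.
Proof.
move=> Hq Hm; split.
  move=> j Hj; rewrite /bad !bitn_fo //; neq.
by rewrite /dform !bitn_fo //; neq.
Qed.

Lemma DLB_flip_gt n (x : bits n) m q : m < n./2 -> bad x m ->
  (forall j, j < m -> ~~ bad x j) -> q < n -> m.*2.+2 <= q ->
  DLB (flipq x q) = DLB x.
Proof.
move=> Hm Hb Hg Hq Hmq; have [H1 H2] := flip_prefix x Hq Hmq.
rewrite (DLB_eqm Hm Hb Hg) -H2; apply: DLB_eqm => //.
  by rewrite H1.
by move=> j Hj; rewrite H1 ?Hg // ltnW.
Qed.

Lemma DLB_flip_lt n (x : bits n) m l (e : bool) : m < n./2 ->
  (forall j, j < m -> ~~ bad x j) -> l < m -> l.*2 + e < n ->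
  DLB (flipq x (l.*2 + e)) = l.*2.
Proof.
move=> Hm Hg Hl Hq.
have Hl' : l < n./2 by apply: ltn_trans Hm.
have [b1 b2] := good_bits (Hg _ Hl).
rewrite (@DLB_eqm _ _ l) //.
- rewrite /dform; case: e Hq => /= Hq; rewrite ?addn0 ?addn1 in Hq *.
    by simpflip; fin.
  by simpflip; fin.
- rewrite /bad; case: e Hq => /= Hq; rewrite ?addn0 ?addn1 in Hq *.
    by simpflip; fin.
  by simpflip; fin.
- move=> j Hj; have [c1 c2] := good_bits (Hg _ (ltn_trans Hj Hl)).
  by rewrite /bad !bitn_fo ?c1 ?c2 //; neq.
Qed.

Lemma DLB_flip_eq00 n (x : bits n) m (e : bool) : m < n./2 ->
  (forall j, j < m -> ~~ bad x j) -> ~~ bitn x m.*2 -> ~~ bitn x m.*2.+1 ->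
  m.*2 + e < n -> DLB (flipq x (m.*2 + e)) = m.*2.
Proof.
move=> Hm Hg b1 b2 Hq.
rewrite (@DLB_eqm _ _ m) //.
- rewrite /dform; case: e Hq => /= Hq; rewrite ?addn0 ?addn1 in Hq *.
    by simpflip; fin.
  by simpflip; fin.
- rewrite /bad; case: e Hq => /= Hq; rewrite ?addn0 ?addn1 in Hq *.
    by simpflip; fin.
  by simpflip; fin.
- move=> j Hj; have [c1 c2] := good_bits (Hg _ Hj).
  by rewrite /bad !bitn_fo ?c1 ?c2 //; neq.
Qed.

Lemma DLB_flip_one n (x : bits n) m q : m < n./2 ->
  (forall j, j < m -> ~~ bad x j) -> bitn x q ->
  (q = m.*2 /\ ~~ bitn x m.*2.+1 \/ q = m.*2.+1 /\ ~~ bitn x m.*2) ->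
  q < n -> DLB (flipq x q) = m.*2.+1.
Proof.
move=> Hm Hg bq Hc Hq.
rewrite (@DLB_eqm _ _ m) //.
- rewrite /dform; case: Hc => [[E b]|[E b]]; subst q.
    by simpflip; fin.
  by simpflip; fin.
- rewrite /bad; case: Hc => [[E b]|[E b]]; subst q.
    by simpflip; fin.
  by simpflip; fin.
- move=> j Hj; have [c1 c2] := good_bits (Hg _ Hj).
  by rewrite /bad !bitn_fo ?c1 ?c2 //; neq.
Qed.

Lemma DLB_flip_zero n (x : bits n) m q : m < n./2 ->
  (forall j, j < m -> ~~ bad x j) -> ~~ bitn x q ->
  (q = m.*2 /\ bitn x m.*2.+1 \/ q = m.*2.+1 /\ bitn x m.*2) ->
  q < n -> DLB (flipq x q) = n \/ (m.+1).*2 <= DLB (flipq x q).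
Proof.
move=> Hm Hg bq Hc Hq.
apply: DLB_gt => // j; rewrite leq_eqVlt => /orP[/eqP ->|Hj]; last first.
  have [c1 c2] := good_bits (Hg _ Hj).
  by rewrite /bad !bitn_fo ?c1 ?c2 //; neq.
rewrite /bad negbK; case: Hc => [[E b]|[E b]]; subst q.
  by simpflip; fin.
by simpflip; fin.
Qed.

Local Open Scope ring_scope.

Definition Hh (R : realType) (n : nat) (b : R) (v : nat) : R :=
  if v == n then 0 else if odd v then (n./2)%:R - (v./2)%:R
  else (n./2)%:R - (v./2)%:R - b.

Lemma Hh_odd (R : realType) n (b : R) m : m.*2.+1 != n ->
  Hh n b m.*2.+1 = (n./2)%:R - m%:R.
Proof. by move=> H; rewrite /Hh (negbTE H) /= odd_double /= uphalf_double. Qed.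

Lemma Hh_even (R : realType) n (b : R) m : m.*2 != n ->
  Hh n b m.*2 = (n./2)%:R - m%:R - b.
Proof. by move=> H; rewrite /Hh (negbTE H) odd_double doubleK. Qed.

Lemma Hh_n (R : realType) n (b : R) : Hh n b n = 0.
Proof. by rewrite /Hh eqxx. Qed.

Lemma Hh_upper (R : realType) n (b : R) m v : 0 <= b -> (m < n./2)%N ->
  (v = n \/ (m.+1).*2 <= v)%N -> Hh n b v <= (n./2)%:R - (m.+1)%:R.
Proof.
move=> Hb Hm [->|Hv]; first by rewrite Hh_n subr_ge0 ler_nat.
have Hh2 : (m.+1 <= v./2)%N by rewrite -(doubleK m.+1) half_leq.
rewrite /Hh; case: eqP => _; first by rewrite subr_ge0 ler_nat.
case: ifP => _.
  by rewrite lerD2l lerN2 ler_nat.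
rewrite -addrA lerD2l -opprD lerN2; apply: (@le_trans _ _ ((v./2)%:R)).
  by rewrite ler_nat.
by rewrite lerDl.
Qed.

Lemma half_lt n v : ~~ odd n -> (v < n)%N -> (v./2 < n./2)%N.
Proof.
move=> Hn Hlt.
have := halfK n; rewrite (negbTE Hn) subn0 => E.
have := halfK v => E2.
move: E E2 Hlt; set a := n./2; set c := v./2; case: (odd v) => /=; rewrite ?subn0 ?subn1 -!muln2 => E E2; lia.
Qed.
Lemma Hh_bounds (R : realType) n (b : R) v : 0 <= b <= 1 -> (v <= n)%N -> ~~ odd n ->
  0 <= Hh n b v <= (n./2)%:R.
Proof.
move=> /andP[b0 b1] Hv Hn.
rewrite /Hh.
case: eqP => Hvn.
  by rewrite lexx ler0n.
have Hlt : (v < n)%N by rewrite ltn_neqAle Hv andbT; apply/eqP.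
have Hh2 := half_lt Hn Hlt.
have Hn0 : 0 <= (v./2)%:R :> R by [].
have Hn1 : 1 <= (n./2)%:R - (v./2)%:R :> R.
  rewrite -natrB; [by rewrite ler1n subn_gt0 | exact: ltnW].
case: ifP => _.
  apply/andP; split; [lra|].
  lra.
lra.
Qed.

Section Acc.
Definition fD n (R : realType) : bits n -> R := fun x => (DLB x)%:R.

Lemma accU (R : realType) (alpha : R) n (x y : bits n) : (DLB x <= DLB y)%N ->
  acc alpha (@fD n R) x y = 1.
Proof. by move=> H; rewrite /acc /fD ler_nat H. Qed.

Lemma accD (R : realType) (alpha : R) n (x y : bits n) : 0 <= alpha ->
  (DLB y < DLB x)%N -> acc alpha (@fD n R) x y = alpha ^- (DLB x - DLB y).
Proof.
move=> Ha H; rewrite /acc /fD ler_nat leqNgt H /=.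
rewrite -powR_invn //; congr (_ `^ _).
by rewrite natrB ?(ltnW H) // opprB.
Qed.
End Acc.

Lemma sum_pairs (R : realType) (F : nat -> R) N :
  \sum_(0 <= q < N.*2) F q = \sum_(0 <= l < N) (F l.*2 + F l.*2.+1).
Proof.
elim: N => [|N IH]; first by rewrite !big_geq.
by rewrite doubleS !big_nat_recr //= IH addrA.
Qed.


Definition G (R : realType) (alpha b : R) n (x : bits n) (q : nat) : R :=
  acc alpha (@fD n R) x (flipq x q) * (Hh n b (DLB (flipq x q)) - Hh n b (DLB x)).

Definition Tm (R : realType) (alpha : R) (m : nat) : R :=
  \sum_(0 <= l < m) ((m - l)%:R * alpha ^- (2 * (m - l))).

Lemma q_lt n l (e : bool) : (n./2).*2 = n -> (l < n./2)%N -> (l.*2 + e < n)%N.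
Proof. move=> E H; rewrite -E; case: e; rewrite -!muln2; lia. Qed.

Lemma G_high (R : realType) (alpha b : R) n (x : bits n) m q :
  (m < n./2)%N -> bad x m -> (forall j, (j < m)%N -> ~~ bad x j) ->
  (q < n)%N -> (m.*2.+2 <= q)%N -> G alpha b x q = 0.
Proof.
by move=> Hm Hb Hg Hq Hmq; rewrite /G (DLB_flip_gt Hm Hb Hg Hq Hmq) subrr mulr0.
Qed.

Lemma G_low (R : realType) (alpha b : R) n (x : bits n) m l (e : bool) :
  1 < alpha -> 0 <= b -> (n./2).*2 = n ->
  (m < n./2)%N -> DLB x = m.*2 \/ DLB x = m.*2.+1 ->
  (forall j, (j < m)%N -> ~~ bad x j) -> (l < m)%N ->
  G alpha b x (l.*2 + e) <=
    (if DLB x == m.*2 then 1 else alpha^-1) * ((m - l)%:R * alpha ^- (2 * (m - l))).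
Proof.
move=> Ha Hb E Hm Hx Hg Hl.
have Hl' : (l < n./2)%N by apply: ltn_trans Hm.
have Hq := q_lt e E Hl'.
rewrite /G (DLB_flip_lt Hm Hg Hl Hq).
have Hne : forall k, (k < n./2)%N -> k.*2 != n /\ k.*2.+1 != n.
  by move=> k Hk; split; apply/eqP; rewrite -E -!muln2; lia.
have a0 : 0 <= alpha by lra.
have p0 : 0 <= alpha ^- (2 * (m - l)) by rewrite invr_ge0 exprn_ge0.
have i0 : 0 <= alpha^-1 by rewrite invr_ge0.
have Hml : (m - l)%:R = m%:R - l%:R :> R by rewrite natrB // ltnW.
have Hfl := DLB_flip_lt Hm Hg Hl Hq.
have [n1 n2] := Hne _ Hl'; have [n3 n4] := Hne _ Hm.
case: Hx => Hx.
  rewrite Hx eqxx accD // ?Hx ?Hfl; last by rewrite ltn_double.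
  have -> : (m.*2 - l.*2 = 2 * (m - l))%N by rewrite -!muln2; lia.
  rewrite !Hh_even //.
  rewrite Hml; lra.
case: eqP => [E'|_]; first by exfalso; move: E'; rewrite Hx -!muln2; lia.
rewrite accD // ?Hx ?Hfl; last by rewrite ltnS leq_double ltnW.
have -> : (m.*2.+1 - l.*2 = 1 + 2 * (m - l))%N by rewrite -!muln2; lia.
rewrite Hh_even //.
rewrite Hh_odd //.
rewrite exprD expr1 invfM Hml.
set a := alpha^-1; set p := (alpha ^+ _)^-1.
have apb : 0 <= a * p * b by rewrite mulr_ge0 // mulr_ge0.
set L := (n./2)%:R.
have -> : a * p * (L - l%:R - b - (L - m%:R)) = a * ((m%:R - l%:R) * p) - a * p * b by ring.
lra.
Qed.

Lemma G_mid00 (R : realType) (alpha b : R) n (x : bits n) m (e : bool) :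
  1 < alpha -> (n./2).*2 = n -> (m < n./2)%N ->
  (forall j, (j < m)%N -> ~~ bad x j) -> ~~ bitn x m.*2 -> ~~ bitn x m.*2.+1 ->
  DLB x = m.*2.+1 ->
  G alpha b x (m.*2 + e) = - (alpha^-1 * b).
Proof.
move=> Ha E Hm Hg b1 b2 Hx.
have Hq := q_lt e E Hm.
have Hfl := DLB_flip_eq00 Hm Hg b1 b2 Hq.
have [n1 n2] : m.*2 != n /\ m.*2.+1 != n.
  by split; apply/eqP; rewrite -E -!muln2; lia.
rewrite /G accD ?Hx ?Hfl //; last lra.
rewrite subSnn expr1 Hh_even // Hh_odd //.
ring.
Qed.

Lemma G_mid01 (R : realType) (alpha b : R) n (x : bits n) m :
  1 < alpha -> 0 <= b -> (n./2).*2 = n -> (m < n./2)%N -> bad x m ->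
  (forall j, (j < m)%N -> ~~ bad x j) -> DLB x = m.*2 ->
  G alpha b x m.*2 + G alpha b x m.*2.+1 <= 2 * b - 1.
Proof.
move=> Ha Hb E Hm Hbad Hg Hx.
have [n1 n2] : m.*2 != n /\ m.*2.+1 != n.
  by split; apply/eqP; rewrite -E -!muln2; lia.
have Hq0 : (m.*2 < n)%N by rewrite -E -!muln2; lia.
have Hq1 : (m.*2.+1 < n)%N by rewrite -E -!muln2; lia.
have Hd : ~~ (~~ bitn x m.*2 && ~~ bitn x m.*2.+1).
  apply/negP => H; move: Hx; rewrite (DLB_eqm Hm Hbad Hg) /dform H.
  by move/eqP; rewrite -!muln2; lia.
have Hup : forall q, (DLB (flipq x q) = n \/ (m.+1).*2 <= DLB (flipq x q))%N ->
    G alpha b x q <= b - 1.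
  move=> q Hc; rewrite /G accU; last first.
    rewrite Hx; case: Hc => [->|H]; first by rewrite -E leq_double ltnW.
    by apply: leq_trans H; rewrite leq_double.
  rewrite mul1r Hx Hh_even //.
  have := Hh_upper Hb Hm Hc; rewrite -addn1 natrD; lra.
have Hone : forall q, DLB (flipq x q) = m.*2.+1 -> G alpha b x q = b.
  move=> q Hc; rewrite /G accU; last by rewrite Hx Hc.
  rewrite mul1r Hx Hc Hh_even // Hh_odd //; ring.
move: Hbad Hd; rewrite /bad.
case c0 : (bitn x m.*2); case c1 : (bitn x m.*2.+1) => //= _ _.
- rewrite Hone; last by apply: (DLB_flip_one Hm Hg); rewrite ?c0 ?c1 //; left.
  have := Hup m.*2.+1 (DLB_flip_zero Hm Hg (negbT c1) (or_intror (conj erefl c0)) Hq1).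
  lra.
- rewrite (Hone m.*2.+1); last by apply: (DLB_flip_one Hm Hg); rewrite ?c0 ?c1 //; right.
  have := Hup m.*2 (DLB_flip_zero Hm Hg (negbT c0) (or_introl (conj erefl c1)) Hq0).
  lra.
Qed.


Lemma drift (R : realType) (alpha b S D : R) n (x : bits n) :
  1 < alpha -> 0 <= b <= 1 -> (n./2).*2 = n ->
  (forall m, Tm alpha m <= S) ->
  D <= 2 * alpha^-1 * (b - S) -> D <= 1 - 2 * b - 2 * S ->
  DLB x != n -> \sum_(i < n) G alpha b x i <= - D.
Proof.
move=> Ha /andP[b0 b1] E HT HD1 HD2 Hxn.
case: (DLB_cases x) => [[_ Hx]|[m [Hm Hb Hg Hx]]]; first by rewrite Hx eqxx in Hxn.
rewrite -(big_mkord xpredT (G alpha b x)).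
have -> : \sum_(0 <= i < n) G alpha b x i = \sum_(0 <= i < (n./2).*2) G alpha b x i by rewrite E.
rewrite sum_pairs (@big_cat_nat _ _ _ m 0 (n./2)) ?leq0n ?(ltnW Hm) //= (big_ltn Hm).
have Hhigh : \sum_(m.+1 <= l < n./2) (G alpha b x l.*2 + G alpha b x l.*2.+1) = 0.
  rewrite big_nat_cond big1 // => l; rewrite ?andbT => /andP[H1 H2].
  rewrite !(G_high _ _ Hm Hb Hg) //; first by rewrite addr0.
  - by rewrite -E -!muln2; lia.
  - by rewrite -!muln2; lia.
  - by rewrite -E -!muln2; lia.
  - by rewrite -!muln2; lia.
rewrite Hhigh addr0.
set c := if DLB x == m.*2 then 1 else alpha^-1.
have Hlow : \sum_(0 <= l < m) (G alpha b x l.*2 + G alpha b x l.*2.+1) <= 2 * c * Tm alpha m.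
  rewrite /Tm mulr_sumr; apply: ler_sum_nat => l /andP[_ Hl].
  have Hd : DLB x = m.*2 \/ DLB x = m.*2.+1.
    by rewrite Hx /dform; case: ifP => _; [right|left].
  have := G_low false Ha b0 E Hm Hd Hg Hl; rewrite addn0.
  have := G_low true Ha b0 E Hm Hd Hg Hl; rewrite addn1 -/c.
  lra.
have HTm := HT m.
have c0 : 0 <= c by rewrite /c; case: ifP => _; rewrite ?ler01 ?invr_ge0; lra.
move: Hx; rewrite /dform; case: ifP => H00 Hx.
- move/andP: H00 => [z0 z1].
  have := G_mid00 b false Ha E Hm Hg z0 z1 Hx; rewrite addn0 => ->.
  have := G_mid00 b true Ha E Hm Hg z0 z1 Hx; rewrite addn1 => ->.
  have Hc : c = alpha^-1 by rewrite /c Hx; case: eqP => // /eqP; rewrite -!muln2; lia.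
  have i0 : 0 <= alpha^-1 by rewrite invr_ge0; lra.
  rewrite Hc in Hlow.
  have : alpha^-1 * Tm alpha m <= alpha^-1 * S by rewrite ler_wpM2l.
  move: HD1; rewrite mulrBr -mulrA.
  lra.
- have := G_mid01 Ha b0 E Hm Hb Hg Hx.
  have Hc : c = 1 by rewrite /c Hx eqxx.
  rewrite Hc mulr1 in Hlow.
  lra.
Qed.


Lemma bitn_ones n k : bitn ([ffun _ => true] : bits n) k = (k < n)%N.
Proof.
rewrite /bitn; case: insubP => [j Hk _|Hk]; first by rewrite ffunE Hk.
by rewrite (negbTE Hk).
Qed.

Lemma is_opt_iff (R : realType) n (y : bits n) : ~~ odd n ->
  is_opt (@fD n R) y = (DLB y == n).
Proof.
move=> Hn; have E : (n./2).*2 = n by rewrite -[RHS](odd_double_half n) (negbTE Hn).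
apply/idP/idP.
  move=> /forallP /(_ [ffun _ => true]).
  rewrite /fD ler_nat (@DLB_all _ [ffun _ => true]).
    by move=> H; rewrite eqn_leq H DLB_le.
  move=> l Hl; rewrite /bad !bitn_ones negbK.
  by apply/andP; split; rewrite -E -!muln2; lia.
move=> /eqP H; apply/forallP => z; rewrite /fD ler_nat H DLB_le //.
Qed.

Lemma acc_bounds (R : realType) (alpha : R) n (x y : bits n) :
  1 <= alpha -> 0 <= acc alpha (@fD n R) x y <= 1.
Proof.
move=> Ha; rewrite /acc; case: ifP => H; first by rewrite ler01 lexx.
rewrite powR_ge0 /= -(powRr0 alpha); apply: ler_powR => //.
by rewrite subr_le0 ltW // ltNge H.
Qed.

Lemma sum_ind (R : realType) n (g : bits n -> R) (u : bits n) :
  \sum_y (u == y)%:R * g y = g u.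
Proof.
rewrite (bigD1 u) //= eqxx mul1r big1 ?addr0 // => y Hy.
by rewrite eq_sym (negbTE Hy) mul0r.
Qed.

Lemma surv_opt (R : realType) (alpha : R) n t (y : bits n) :
  is_opt (@fD n R) y -> surv alpha (@fD n R) t y = 0.
Proof.
move=> Hy; elim: t y Hy => [|t IH] y Hy /=; first by rewrite Hy.
apply: big1 => x _.
case: (eqVneq x y) => [->|Hxy]; first by rewrite IH // mul0r.
rewrite big1 ?mulr0 // => i _.
case: ifP => Ho; first by rewrite mulr0.
have -> : (flip x i == y) = false by apply/negbTE; apply/eqP => E; rewrite E Hy in Ho.
by rewrite !mulr0 addr0 mulr0.
Qed.

Lemma surv_ge0 (R : realType) (alpha : R) n t (y : bits n) :
  1 <= alpha -> 0 <= surv alpha (@fD n R) t y.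
Proof.
move=> Ha; elim: t y => [|t IH] y /=.
  by case: ifP => _ //; rewrite invr_ge0 ler0n.
apply: sumr_ge0 => x _; apply: mulr_ge0 => //; apply: sumr_ge0 => i _.
apply: mulr_ge0; first by rewrite invr_ge0 ler0n.
case: ifP => _ //.
have /andP[a0 a1] := acc_bounds x (flip x i) Ha.
apply: addr_ge0; apply: mulr_ge0 => //; lra.
Qed.


Lemma inner_K (R : realType) (alpha b : R) n (x : bits n) (i : 'I_n) :
  ~~ odd n ->
  \sum_y (if is_opt (@fD n R) (flip x i) then 0
          else acc alpha (@fD n R) x (flip x i) * (flip x i == y)%:R
             + (1 - acc alpha (@fD n R) x (flip x i)) * (x == y)%:R) * Hh n b (DLB y)
  = Hh n b (DLB x) + G alpha b x i.
Proof.
move=> Hn; rewrite /G !flipE; case Ho : (is_opt (@fD n R) (flipq x i)) => /=.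
  rewrite big1 => [|y _]; last by rewrite mul0r.
  move: Ho; rewrite is_opt_iff // => /eqP Ho.
  rewrite accU ?Ho ?DLB_le // Hh_n; ring.
under eq_bigr do rewrite mulrDl -!mulrA.
rewrite big_split /= -!mulr_sumr !sum_ind; ring.
Qed.

Lemma Ax_eq (R : realType) (alpha b : R) n (x : bits n) :
  (0 < n)%N -> ~~ odd n ->
  \sum_y (\sum_(i < n) n%:R^-1 *
     (if is_opt (@fD n R) (flip x i) then 0
      else acc alpha (@fD n R) x (flip x i) * (flip x i == y)%:R
         + (1 - acc alpha (@fD n R) x (flip x i)) * (x == y)%:R)) * Hh n b (DLB y)
  = Hh n b (DLB x) + n%:R^-1 * \sum_(i < n) G alpha b x i.
Proof.
move=> Hn0 Hn.
under eq_bigr do rewrite mulr_suml.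
rewrite exchange_big /=.
under eq_bigr do (under eq_bigr do rewrite -mulrA; rewrite -mulr_sumr inner_K //).
rewrite -mulr_sumr big_split /= sumr_const card_ord mulrDr.
have Hn' : n%:R != 0 :> R by rewrite pnatr_eq0 -lt0n.
have -> : Hh n b (DLB x) *+ n = n%:R * Hh n b (DLB x) by rewrite mulr_natl.
by rewrite mulrA mulVf // mul1r.
Qed.

Definition Phi (R : realType) (alpha b : R) n t : R :=
  \sum_(y : bits n) surv alpha (@fD n R) t y * Hh n b (DLB y).
Definition St (R : realType) (alpha : R) n t : R :=
  \sum_(y : bits n) surv alpha (@fD n R) t y.

Lemma step (R : realType) (alpha b S D : R) n t :
  (0 < n)%N -> ~~ odd n -> 1 < alpha -> 0 <= b <= 1 ->
  (forall m, Tm alpha m <= S) ->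
  D <= 2 * alpha^-1 * (b - S) -> D <= 1 - 2 * b - 2 * S ->
  Phi alpha b n t.+1 <= Phi alpha b n t - D / n%:R * St alpha n t.
Proof.
move=> Hn0 Hn Ha Hb HT HD1 HD2.
have E : (n./2).*2 = n by rewrite -[RHS](odd_double_half n) (negbTE Hn).
rewrite /Phi /St /=.
under eq_bigr do rewrite mulr_suml.
rewrite exchange_big /= mulr_sumr -sumrB; apply: ler_sum => x _.
under eq_bigr do rewrite -mulrA.
rewrite -mulr_sumr Ax_eq //.
case Ho : (is_opt (@fD n R) x).
  by rewrite surv_opt // !(mulr0, mul0r) subrr.
have s0 := @surv_ge0 R alpha n t x (ltW Ha).
have Hd := drift (x:=x) Ha Hb E HT HD1 HD2.
rewrite is_opt_iff // in Ho; have := Hd (negbT Ho).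
have i0 : 0 <= n%:R^-1 :> R by rewrite invr_ge0 ler0n.
move=> H.
have H2 : n%:R^-1 * \sum_(i < n) G alpha b x i <= - (D / n%:R).
  by rewrite mulrC -mulNr ler_wpM2r.
rewrite mulrDr [D / _ * _]mulrC.
have := ler_wpM2l s0 H2; rewrite mulrN; lra.
Qed.

Import numFieldNormedType.Exports.

Definition ps (R : realType) (alpha : R) (N : nat) : R :=
  \sum_(1 <= k < N) k%:R * alpha ^- (2 * k).

Lemma ps_closed (R : realType) (alpha : R) N : alpha != 0 ->
  let q := (alpha ^+ 2)^-1 in
  ps alpha N.+1 * (1 - q) ^+ 2 = q - N.+1%:R * q ^+ N.+1 + N%:R * q ^+ N.+2.
Proof.
move=> a0 q.
have Hk : forall k, alpha ^- (2 * k) = q ^+ k by move=> k; rewrite exprM exprVn.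
elim: N => [|N IH].
  by rewrite /ps big_geq // mul0r expr1; ring.
rewrite /ps big_nat_recr //= -/(ps alpha N.+1) mulrDl IH Hk.
rewrite !exprS -!natr1; ring.
Qed.

Lemma ps_le (R : realType) (alpha : R) N : 1 < alpha ->
  ps alpha N <= (alpha ^+ 2)^-1 / (1 - (alpha ^+ 2)^-1) ^+ 2.
Proof.
move=> Ha; set q := (alpha ^+ 2)^-1.
have a0 : alpha != 0 by apply/eqP => E; rewrite E in Ha; lra.
have q0 : 0 < q by rewrite invr_gt0 exprn_gt0 //; lra.
have q1 : q < 1.
  rewrite /q invf_lt1 ?exprn_gt0 //; last lra.
  by rewrite expr_gt1 //; lra.
have d0 : 0 < (1 - q) ^+ 2 by rewrite exprn_gt0 // subr_gt0.
case: N => [|N]; first by rewrite /ps big_geq // divr_ge0 // ltW.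
rewrite ler_pdivlMr // ps_closed //.
have : 0 <= q ^+ N.+1 by rewrite exprn_ge0 // ltW.
rewrite [q ^+ N.+2]exprSr; move: (q ^+ N.+1) => Q HQ.
have HN : 0 <= N%:R :> R by [].
have H3 : 0 <= Q * (N%:R * (1 - q)) by rewrite mulr_ge0 // mulr_ge0 // subr_ge0 ltW.
rewrite -natr1 -/q; nra.
Qed.

Lemma ps_nd (R : realType) (alpha : R) : 0 <= alpha ->
  {homo ps alpha : n m / (n <= m)%N >-> n <= m}.
Proof.
move=> a0 n m Hnm; rewrite /ps.
case: n Hnm => [|n] Hnm; first by rewrite big_geq // sumr_ge0 // => k _; rewrite mulr_ge0 // invr_ge0 exprn_ge0.
rewrite (big_cat_nat _ (n:=n.+1) (m:=1) (p:=m)) //= lerDl.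
by rewrite sumr_ge0 // => k _; rewrite mulr_ge0 // invr_ge0 exprn_ge0.
Qed.

Definition Slim (R : realType) (alpha : R) : R :=
  limn (fun N => \sum_(1 <= k < N) k%:R * alpha ^- (2 * k)).

Lemma Slim_facts (R : realType) (alpha : R) : 1 < alpha ->
  [/\ forall N, ps alpha N <= Slim alpha,
      Slim alpha <= (alpha ^+ 2)^-1 / (1 - (alpha ^+ 2)^-1) ^+ 2 &
      0 <= Slim alpha].
Proof.
move=> Ha.
have nd := ps_nd (ltW (lt_trans ltr01 Ha)).
have cv : cvgn (ps alpha).
  apply: nondecreasing_is_cvgn => //.
  by exists ((alpha ^+ 2)^-1 / (1 - (alpha ^+ 2)^-1) ^+ 2) => _ [N _ <-]; apply: ps_le.
have H1 : forall N, ps alpha N <= Slim alpha by move=> N; exact: nondecreasing_cvgn_le.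
split => //.
  by apply: limr_le => //; apply: nearW => N; apply: ps_le.
by apply: le_trans (H1 0%N); rewrite /ps big_geq.
Qed.

Lemma Tm_ps (R : realType) (alpha : R) m : Tm alpha m = ps alpha m.+1.
Proof.
rewrite /Tm /ps big_nat_rev /= add0n big_add1 /=.
apply: eq_big_nat => l /andP[_ Hl].
by have -> : (m - (m - l.+1) = l.+1)%N by lia.
Qed.


Lemma St_ge0 (R : realType) (alpha : R) n t : 1 <= alpha -> 0 <= St alpha n t.
Proof. by move=> Ha; apply: sumr_ge0 => y _; apply: surv_ge0. Qed.

Lemma St0_le1 (R : realType) (alpha : R) n : St alpha n 0 <= 1.
Proof.
have Hc : (0 < #|{: bits n}|)%N by apply/card_gt0P; exists [ffun => true].
apply: (@le_trans _ _ (\sum_(y : bits n) (#|{: bits n}|%:R)^-1)).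
  apply: ler_sum => y _ /=; case: ifP => _ //; rewrite invr_ge0 ler0n.
rewrite sumr_const (@eq_card _ xpredT {: bits n}) //.
have -> : forall (k : nat) (c : R), c *+ k = c * k%:R by move=> k c; rewrite mulr_natr.
by rewrite mulVf // pnatr_eq0 -lt0n.
Qed.

Lemma Phi_bounds (R : realType) (alpha b : R) n t : 1 <= alpha -> 0 <= b <= 1 ->
  ~~ odd n ->
  0 <= Phi alpha b n t <= (n./2)%:R * St alpha n t.
Proof.
move=> Ha Hb Hn; rewrite /Phi /St mulr_sumr; apply/andP; split.
  apply: sumr_ge0 => y _; apply: mulr_ge0; first exact: surv_ge0.
  by case/andP: (Hh_bounds Hb (DLB_le y Hn) Hn).
apply: ler_sum => y _; rewrite mulrC; apply: ler_wpM2r; first exact: surv_ge0.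
by case/andP: (Hh_bounds Hb (DLB_le y Hn) Hn).
Qed.

Lemma tele_sum (R : realType) (alpha b S D : R) n N :
  (0 < n)%N -> ~~ odd n -> 1 < alpha -> 0 <= b <= 1 ->
  (forall m, Tm alpha m <= S) ->
  D <= 2 * alpha^-1 * (b - S) -> D <= 1 - 2 * b - 2 * S ->
  D / n%:R * \sum_(0 <= t < N) St alpha n t + Phi alpha b n N <= Phi alpha b n 0.
Proof.
move=> Hn0 Hn Ha Hb HT HD1 HD2; elim: N => [|N IH].
  by rewrite big_geq // mulr0 add0r.
rewrite big_nat_recr //= mulrDr.
have := step N Hn0 Hn Ha Hb HT HD1 HD2.
lra.
Qed.

Unset Implicit Arguments.

Theorem theorem13 (R : realType) (n : nat) (alpha : R) :
  (0 < n)%N -> ~~ odd n -> Num.sqrt 2 + 1 < alpha ->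
  (expected_runtime alpha (fun x : bits n => (DLB x)%:R)
     <= ((n%:R ^+ 2) / Cconst alpha)%:E)%E.
Proof.
move=> Hn0 Hn Hsa.
have E : (n./2).*2 = n by rewrite -[RHS](odd_double_half n) (negbTE Hn).
have s0 : 0 <= Num.sqrt 2 :> R by apply: sqrtr_ge0.
have s2 : Num.sqrt 2 ^+ 2 = 2 :> R by rewrite sqr_sqrtr // ler0n.
have s1 : 1 <= Num.sqrt 2 :> R by nra.
have Ha2 : 2 <= alpha by lra.
have Ha : 1 < alpha by lra.
have a0 : alpha != 0 by apply/eqP => e; rewrite e in Ha; lra.
have [H1 H2 H3] := Slim_facts Ha.
set S := Slim alpha in H1 H2 H3.
have HB : (alpha ^+ 2)^-1 / (1 - (alpha ^+ 2)^-1) ^+ 2 < 4^-1.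
  set q := (alpha ^+ 2)^-1.
  have q0 : 0 < q by rewrite invr_gt0 exprn_gt0 //; lra.
  have q1 : q < 1.
    rewrite /q invf_lt1 ?exprn_gt0 //; last lra.
    by rewrite expr_gt1 //; lra.
  have d0 : 0 < (1 - q) ^+ 2 by rewrite exprn_gt0 // subr_gt0.
  rewrite ltr_pdivrMr //.
  have key : (1 - q) ^+ 2 - 4 * q = q ^+ 2 * ((alpha ^+ 2 - 1) ^+ 2 - 4 * alpha ^+ 2).
    by rewrite /q; field.
  have k1 : alpha ^+ 2 - 1 - 2 * alpha > 0.
    have : (alpha - 1) ^+ 2 > 2.
      rewrite -s2; have h : Num.sqrt 2 < alpha - 1 by lra.
      nra.
    move=> h; nra.
  have k2 : (alpha ^+ 2 - 1) ^+ 2 - 4 * alpha ^+ 2 > 0.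
    have -> : (alpha ^+ 2 - 1) ^+ 2 - 4 * alpha ^+ 2 =
       (alpha ^+ 2 - 1 - 2 * alpha) * (alpha ^+ 2 - 1 + 2 * alpha) by ring.
    apply: mulr_gt0 => //; nra.
  have k3 : 0 < q ^+ 2 by rewrite exprn_gt0.
  have : 0 < q ^+ 2 * ((alpha ^+ 2 - 1) ^+ 2 - 4 * alpha ^+ 2) by apply: mulr_gt0.
  rewrite -key; lra.
have HS : S < 4^-1 by apply: le_lt_trans H2 HB.
set P := 2^-1 - 2 * S.
have P0 : 0 < P by rewrite /P; lra.
have P1 : P <= 2^-1 by rewrite /P; lra.
set b := 4^-1 + P / 8.
set D := alpha^-1 * (5 / 4 * P).
have ai0 : 0 < alpha^-1 by rewrite invr_gt0; lra.
have ai1 : alpha^-1 * alpha = 1 by rewrite mulVf.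
have ai2 : alpha^-1 <= 2^-1 by nra.
have Hb : 0 <= b <= 1 by apply/andP; split; rewrite /b; lra.
have HT : forall m, Tm alpha m <= S by move=> m; rewrite Tm_ps.
have HD1 : D <= 2 * alpha^-1 * (b - S).
  have -> : 2 * alpha^-1 * (b - S) = alpha^-1 * (2 * (b - S)) by ring.
  rewrite /D; apply: ler_wpM2l; [exact: ltW | rewrite /b /P; lra].
have HD2 : D <= 1 - 2 * b - 2 * S.
  have : alpha^-1 * (5 / 4 * P) <= 2^-1 * (5 / 4 * P) by rewrite ler_wpM2r //; lra.
  rewrite /D /b /P; lra.
have D0 : 0 < D by rewrite /D mulr_gt0 //; lra.
set L := (n./2)%:R : R.
have HN0 : 0 < n%:R :> R by rewrite ltr0n.
have Hsum : forall N, \sum_(0 <= t < N) St alpha n t <= L * n%:R / D.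
  move=> N.
  have T := tele_sum N Hn0 Hn Ha Hb HT HD1 HD2.
  have /andP[P0' P0''] := Phi_bounds N (ltW Ha) Hb Hn.
  have /andP[_ Q0] := Phi_bounds 0 (ltW Ha) Hb Hn.
  have St1 := St0_le1 alpha n.
  have L0 : 0 <= L by rewrite /L ler0n.
  have : L * St alpha n 0 <= L by rewrite -{2}(mulr1 L) ler_wpM2l.
  move=> LS.
  have H : D / n%:R * \sum_(0 <= t < N) St alpha n t <= L by lra.
  rewrite ler_pdivlMr //.
  have -> : (\sum_(0 <= t < N) St alpha n t) * D =
    (D / n%:R * \sum_(0 <= t < N) St alpha n t) * n%:R.
    by field; rewrite lt0r_neq0.
  by rewrite ler_wpM2r // ltW.
have Hser : (\sum_(0 <= t <oo) (St alpha n t)%:E <= (L * n%:R / D)%:E)%E.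
  apply: lime_le.
    by apply: is_cvg_nneseries => t _ _; rewrite lee_fin St_ge0 // ltW.
  by apply: nearW => N; rewrite sumEFin lee_fin.
rewrite /expected_runtime.
apply: le_trans (leeD2l _ Hser) _.
rewrite -EFinD lee_fin.
have -> : Cconst alpha = 2 / alpha * P by [].
have hL : L = n%:R / 2 by rewrite /L -{2}E -muln2 natrM; field.
have n2 : 2 <= n%:R :> R.
  have k1 : (0 < n./2)%N by rewrite -ltn_double E.
  by rewrite ler_nat -E (leq_double 1).
set K := alpha * n%:R ^+ 2 / P.
have e1 : L * n%:R / D = 2 / 5 * K.
  rewrite hL /D /K; field; apply/andP; split; [exact: lt0r_neq0|exact: a0].
have e2 : n%:R ^+ 2 / (2 / alpha * P) = K / 2.
  rewrite /K; field; apply/andP; split; [exact: lt0r_neq0|exact: a0].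
rewrite e1 e2.
have : 10 <= K.
  rewrite /K ler_pdivlMr //.
  have : 8 <= alpha * n%:R ^+ 2 by nra.
  lra.
lra.
Qed.
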